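(* In the linear deterministic diamond network with a disturbing node with gains $n_1,n_2,n_3,n_4,m$, suppose $n_1>n_2$, $n_3\ge n_4$ and $m\ge n_1$. Then the linear capacity is $C=\min(n_1,n_4)$.
   Context: The shift matrix $Q$ is the $q\times q$ matrix over $\mathbb{F}_2$ with $Q_{i+1,i}=1$ for $1\le i\le q-1$ and all other entries $0$, where $q=\max(n_1,n_2,n_3,n_4,m)$ and all gains are nonnegative integers. Network: source $S$, relays $A,B$, destination $D$, disturbing node $M$; gains $n_1$ ($S\to A$), $n_2$ ($S\to B$), $n_3$ ($A\to D$), $n_4$ ($B\to D$), $m$ ($M\to A$ and $M\to B$). Each node transmits $x_i\in\mathbb{F}_2^q$ and receives $y_j=\sum_{k:(k,j)\text{ an edge}}Q^{q-n_{(k,j)}}x_k$; relays use linear maps $x_A=G_Ay_A$, $x_B=G_By_B$ with $G_A,G_B$ arbitrary $q\times q$ matrices over $\mathbb{F}_2$. Then $y_D=G_Sx_S+G_Mx_M$ with $G_S=Q^{q-n_3}G_AQ^{q-n_1}+Q^{q-n_4}G_BQ^{q-n_2}$ and $G_M=Q^{q-n_3}G_AQ^{q-m}+Q^{q-n_4}G_BQ^{q-m}$. The rate $R(G_A,G_B)$ is the maximum dimension of a subspace $\mathcal{X}\subseteq\mathbb{F}_2^q$ such that for all $x_S,x_S'\in\mathcal{X}$, $x_M,x_M'\in\mathbb{F}_2^q$, $G_Sx_S+G_Mx_M=G_Sx_S'+G_Mx_M'$ implies $x_S=x_S'$. The linear capacity is $C=\max_{G_A,G_B}R(G_A,G_B)$.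 *)

(* Defs.v *)
From mathcomp Require Import all_boot all_order all_algebra.
Set Implicit Arguments. Unset Strict Implicit. Unset Printing Implicit Defensive.
Import GRing.Theory.
Local Open Scope ring_scope.

Definition qdim (n1 n2 n3 n4 m : nat) : nat :=
  maxn (maxn (maxn (maxn n1 n2) n3) n4) m.

(* Shift matrix: with 0-based indices, Q i j = 1 iff i = j + 1
   (i.e. Q_{i+1,i} = 1 in 1-based indexing). *)
Definition shiftQ (q : nat) : 'M['F_2]_q :=
  \matrix_(i < q, j < q) ((nat_of_ord i == (nat_of_ord j).+1)%N)%:R.

Definition shiftQpow (q k : nat) : 'M['F_2]_q := (shiftQ q) ^+ k.

(* End-to-end transfer matrices from S and from M to D. *)
Definition GSmx (n1 n2 n3 n4 m : nat) (GA GB : 'M['F_2]_(qdim n1 n2 n3 n4 m)) :=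
  let q := qdim n1 n2 n3 n4 m in
  shiftQpow q (q - n3) *m GA *m shiftQpow q (q - n1)
  + shiftQpow q (q - n4) *m GB *m shiftQpow q (q - n2).

Definition GMmx (n1 n2 n3 n4 m : nat) (GA GB : 'M['F_2]_(qdim n1 n2 n3 n4 m)) :=
  let q := qdim n1 n2 n3 n4 m in
  shiftQpow q (q - n3) *m GA *m shiftQpow q (q - m)
  + shiftQpow q (q - n4) *m GB *m shiftQpow q (q - m).

(* A subspace X of F_2^q is given as the column space of a q x q matrix V
   (every subspace arises this way); its dimension is \rank V. *)
Definition decodable (q : nat) (GS GM V : 'M['F_2]_q) : bool :=
  [forall c : 'cV['F_2]_q, forall c' : 'cV['F_2]_q,
   forall xM : 'cV['F_2]_q, forall xM' : 'cV['F_2]_q,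
     (GS *m (V *m c) + GM *m xM == GS *m (V *m c') + GM *m xM')
       ==> (V *m c == V *m c')].

Definition rate (n1 n2 n3 n4 m : nat) (GA GB : 'M['F_2]_(qdim n1 n2 n3 n4 m)) : nat :=
  \max_(V : 'M['F_2]_(qdim n1 n2 n3 n4 m)
          | decodable (GSmx GA GB) (GMmx GA GB) V) \rank V.

Definition lin_capacity (n1 n2 n3 n4 m : nat) : nat :=
  \max_(GA : 'M['F_2]_(qdim n1 n2 n3 n4 m))
   \max_(GB : 'M['F_2]_(qdim n1 n2 n3 n4 m)) rate GA GB.

(* Main.v *)
Require Import Defs.
From mathcomp Require Import all_boot all_order all_algebra zify.
Set Implicit Arguments. Unset Strict Implicit. Unset Printing Implicit Defensive.
Import GRing.Theory.
Local Open Scope ring_scope.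

Section Q.
Variable q : nat.
Local Notation Q := (shiftQ q).

Lemma QE k (i j : 'I_q) : (Q ^+ k) i j = ((i : nat) == j + k)%N%:R.
Proof.
elim: k i j => [|k IH] i j.
  by rewrite expr0 mxE addn0.
rewrite exprSr -mulmxE mxE.
have [lt|ge] := ltnP j.+1 q.
  rewrite (bigD1 (Ordinal lt)) //= big1 ?addr0 => [|l /eqP nl].
    by rewrite IH mxE eqxx mulr1 addSnnS.
  rewrite mxE; case: eqP => [e|_]; last by rewrite mulr0.
  by case: nl; apply: val_inj.
rewrite big1 => [|l _].
  by case: eqP => // e; have := ltn_ord i; rewrite e; lia.
rewrite mxE; case: eqP => [e|_]; last by rewrite mulr0.
by have := ltn_ord l; lia.
Qed.

Lemma Q_nil k : (q <= k)%N -> Q ^+ k = 0.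
Proof.
move=> h; apply/matrixP => i j; rewrite QE mxE.
by case: eqP => // e; have := ltn_ord i; lia.
Qed.

Lemma Q_pid n : (n <= q)%N -> Q ^+ (q - n) *m pid_mx n = Q ^+ (q - n).
Proof.
move=> h; apply/matrixP => i j; rewrite mxE (bigD1 j) //= big1 ?addr0 => [|l nl].
  rewrite QE !mxE eqxx /=; case: eqP => e; last by rewrite mul0r.
  have hj : (j < n)%N by have := ltn_ord i; rewrite e; lia.
  by rewrite hj mulr1.
rewrite !mxE; case: eqP => e; last by rewrite andFb mulr0.
by move: nl; rewrite -val_eqE /= e eqxx.
Qed.

Lemma QtQ s : (Q ^+ s)^T *m Q ^+ s = pid_mx (q - s).
Proof.
apply/matrixP => i j; rewrite !mxE.
have [lt|ge] := ltnP (i + s) q.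
  rewrite (bigD1 (Ordinal lt)) //= big1 ?addr0 => [|l nl].
    rewrite /trmx mxE !QE /= eqxx mul1r eqn_add2r.
    have -> : (i < q - s)%N by lia.
    by rewrite andbT.
  rewrite /trmx mxE QE; case: eqP => e; last by rewrite mul0r.
  by move: nl; rewrite -val_eqE /= e eqxx.
rewrite big1 => [|l _].
  have -> : (i < q - s)%N = false by lia.
  by rewrite andbF.
rewrite /trmx mxE QE; case: eqP => e; last by rewrite mul0r.
by have := ltn_ord l; lia.
Qed.
End Q.

Lemma mul_col_r (F : fieldType) m n p (V : 'M[F]_(m, n)) (B : 'M_(n, p)) j :
  V *m col j B = col j (V *m B).
Proof. by apply/matrixP=> i k; rewrite !mxE; apply: eq_bigr => l _; rewrite !mxE. Qed.

Lemma rank_le_inj (F : fieldType) q (A V : 'M[F]_q) :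
  (forall c : 'cV_q, A *m (V *m c) = 0 -> V *m c = 0) -> (\rank V <= \rank A)%N.
Proof.
move=> H.
rewrite -mxrank_tr -(mxrank_tr A) -(mxrank_mul_ker V^T A^T).
have -> : \rank (V^T :&: kermx A^T)%MS = 0%N.
  apply/eqP; rewrite mxrank_eq0.
  have /sub_kermxP WA : ((V^T :&: kermx A^T)%MS <= kermx A^T)%MS by apply: capmxSr.
  have /submxP [D WD] : ((V^T :&: kermx A^T)%MS <= V^T)%MS by apply: capmxSl.
  move: WA; rewrite WD => WA.
  have H0 : A *m (V *m D^T) = 0.
    by apply: trmx_inj; rewrite trmx0 !trmx_mul trmxK.
  have H1 : V *m D^T = 0.
    apply/matrixP => i j.
    have := H (col j D^T); rewrite !mul_col_r H0 col0 => /(_ erefl).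
    by move/matrixP/(_ i 0); rewrite !mxE.
  by rewrite -[D *m _]trmxK trmx_mul trmxK H1 trmx0.
by rewrite addn0 mxrankM_maxr.
Qed.

Section Main.
Variables n1 n2 n3 n4 m : nat.
Local Notation q := (qdim n1 n2 n3 n4 m).
Local Notation Q := (shiftQ q).
Hypotheses (h12 : (n2 < n1)%N) (h34 : (n4 <= n3)%N) (h1m : (n1 <= m)%N).

Lemma qge : [/\ (n1 <= q)%N, (n2 <= q)%N, (n3 <= q)%N, (n4 <= q)%N & (m <= q)%N].
Proof. rewrite /qdim; split; lia. Qed.

Lemma dec_zero (GA GB V : 'M['F_2]_q) :
  decodable (GSmx GA GB) (GMmx GA GB) V ->
  forall c xM : 'cV['F_2]_q, GSmx GA GB *m (V *m c) = GMmx GA GB *m xM -> V *m c = 0.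
Proof.
move=> /forallP dec c xM e.
move: (dec c) => /forallP /(_ 0) /forallP /(_ 0) /forallP /(_ xM) /implyP.
rewrite !mulmx0 addr0 add0r e eqxx => /(_ erefl) /eqP //.
Qed.

Lemma GS_pid (GA GB : 'M['F_2]_q) : GSmx GA GB *m pid_mx n1 = GSmx GA GB.
Proof.
have [q1 q2 q3 q4 qm] := qge.
rewrite /GSmx /shiftQpow /= mulmxDl -!mulmxA Q_pid //.
have -> : (q - n2 = (n1 - n2) + (q - n1))%N by lia.
by rewrite exprD -mulmxE -!mulmxA Q_pid.
Qed.

Lemma GS_split (GA GB : 'M['F_2]_q) :
  GSmx GA GB = GMmx GA GB *m Q ^+ (m - n1)
     + Q ^+ (q - n4) *m (GB *m (Q ^+ (q - n2) - Q ^+ (q - n1))).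
Proof.
have [q1 q2 q3 q4 qm] := qge.
rewrite /GSmx /GMmx /shiftQpow /=.
rewrite !mulmxE mulrDl -!mulrA -!exprD.
have -> : (q - m + (m - n1) = q - n1)%N by lia.
rewrite mulrBr mulrBr !mulrA.
by rewrite -addrA; congr (_ + _); rewrite addrC subrK.
Qed.

Lemma rank_Qpow n : (n <= q)%N -> (\rank (Q ^+ (q - n)) <= n)%N.
Proof.
move=> h; rewrite -Q_pid //; apply: leq_trans (mxrankM_maxr _ _) _.
by rewrite rank_pid_mx.
Qed.

Lemma upper (GA GB V : 'M['F_2]_q) :
  decodable (GSmx GA GB) (GMmx GA GB) V -> (\rank V <= minn n1 n4)%N.
Proof.
move=> dec; have [q1 q2 q3 q4 qm] := qge.
rewrite leq_min; apply/andP; split.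
  apply: leq_trans (rank_le_inj (A := pid_mx n1) _) _; last by rewrite rank_pid_mx.
  move=> c e; apply: (dec_zero dec (xM := 0)).
  by rewrite mulmx0 -GS_pid -mulmxA e mulmx0.
set A := Q ^+ (q - n4) *m (GB *m (Q ^+ (q - n2) - Q ^+ (q - n1))).
apply: leq_trans (rank_le_inj (A := A) _) _; last first.
  by apply: leq_trans (mxrankM_maxl _ _) _; apply: rank_Qpow.
move=> c e; apply: (dec_zero dec (xM := Q ^+ (m - n1) *m (V *m c))).
by rewrite GS_split -/A mulmxDl e addr0 !mulmxA.
Qed.

Lemma lower : exists GA GB V : 'M['F_2]_q,
  decodable (GSmx GA GB) (GMmx GA GB) V /\ (minn n1 n4 <= \rank V)%N.
Proof.
have [q1 q2 q3 q4 qm] := qge.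
set k := minn n1 n4.
set d := (n1 - n2)%N.
set GB := (Q ^+ (q - n1))^T.
set GA := - (Q ^+ (n3 - n4) *m GB).
set W := \sum_(i < q) (Q ^+ d) ^+ i.
pose V : 'M['F_2]_q := W *m pid_mx k.
have hW : (Q ^+ d - 1) *m W = - 1.
  rewrite mulmxE -subrX1 -exprM Q_nil ?sub0r //.
  rewrite /d; nia.
have hGM : GMmx GA GB = 0.
  rewrite /GMmx /shiftQpow /= /GA !mulmxE mulrN mulNr !mulrA -exprD.
  have -> : (q - n3 + (n3 - n4) = q - n4)%N by lia.
  by rewrite addNr.
have hGS : GSmx GA GB = Q ^+ (q - n4) *m GB *m Q ^+ (q - n1) *m (Q ^+ d - 1).
  rewrite /GSmx /shiftQpow /= /GA !mulmxE mulrN mulNr !mulrA -exprD.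
  have -> : (q - n3 + (n3 - n4) = q - n4)%N by lia.
  have -> : (q - n2 = (q - n1) + d)%N by rewrite /d; lia.
  rewrite exprD mulrBr mulr1 !mulrA.
  by rewrite addrC.
have hB : GB *m Q ^+ (q - n1) *m pid_mx k = pid_mx k :> 'M['F_2]_q.
  rewrite /GB QtQ mul_pid_mx.
  congr pid_mx; rewrite /k; lia.
have hGSV : GSmx GA GB *m V = - (Q ^+ (q - n4) *m (pid_mx k : 'M['F_2]_q)).
  rewrite hGS /V -!mulmxA (mulmxA _ W) hW mulNmx mul1mx !mulmxN.
  by rewrite !mulmxA -(mulmxA _ GB) -(mulmxA _ (GB *m _)) hB.
have hinj : forall c c' : 'cV['F_2]_q,
    Q ^+ (q - n4) *m (pid_mx k : 'M['F_2]_q) *m c = Q ^+ (q - n4) *m pid_mx k *m c' ->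
    (pid_mx k : 'M['F_2]_q) *m c = pid_mx k *m c'.
  move=> c c' /(congr1 (mulmx (Q ^+ (q - n4))^T)).
  have e : (Q ^+ (q - n4))^T *m (Q ^+ (q - n4) *m pid_mx k) = pid_mx k :> 'M['F_2]_q.
    rewrite mulmxA QtQ mul_pid_mx; congr pid_mx; rewrite /k; lia.
  by rewrite !mulmxA -!(mulmxA _ (Q ^+ (q - n4))) e.
exists GA, GB, V; split.
  apply/forallP => c; apply/forallP => c'; apply/forallP => xM; apply/forallP => xM'.
  apply/implyP; rewrite hGM !mul0mx !addr0 (mulmxA _ V) (mulmxA _ V) hGSV !mulNmx.
  move=> /eqP /oppr_inj /hinj e.
  by rewrite /V -!mulmxA e.
have : (Q ^+ d - 1) *m V = - (pid_mx k : 'M['F_2]_q) by rewrite /V mulmxA hW mulNmx mul1mx.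
move=> e.
have hr : \rank (pid_mx k : 'M['F_2]_q) = k by rewrite rank_pid_mx // /k; lia.
by rewrite -{1}hr -mxrank_opp -e mxrankM_maxr.
Qed.
End Main.

Theorem mainTheorem5 (n1 n2 n3 n4 m : nat) :
  (n2 < n1)%N -> (n4 <= n3)%N -> (n1 <= m)%N ->
  lin_capacity n1 n2 n3 n4 m = minn n1 n4.
Proof.
move=> h12 h34 h1m; apply/eqP; rewrite eqn_leq; apply/andP; split.
  apply/bigmax_leqP => GA _; apply/bigmax_leqP => GB _.
  apply/bigmax_leqP => V dec; exact: (upper h12 h34 h1m dec).
have [GA [GB [V [dec hk]]]] := lower h12 h34 h1m.
apply: leq_trans hk _.
have h1 : (\rank V <= rate GA GB)%N by rewrite /rate (bigD1 V dec) /= leq_maxl.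
have h2 := @leq_bigmax 'M['F_2]_(qdim n1 n2 n3 n4 m) (fun GB0 => rate GA GB0) GB.
have h3 := @leq_bigmax 'M['F_2]_(qdim n1 n2 n3 n4 m) (fun GA0 => \max_GB0 rate GA0 GB0) GA.
cbv beta in h2, h3.
exact: leq_trans h1 (leq_trans h2 h3).
Qed.
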